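(* Let $m,M,q,Q\ge1$ with $2m+q+1=2M+Q+1=n$. Let $\mathcal{A}=(A_0,\ldots,A_q)$ be a symmetric Clifford system on $\mathbb{R}^{2m}$ and $\mathcal{B}=(B_0,\ldots,B_Q)$ a symmetric Clifford system on $\mathbb{R}^{2M}$, and consider the cubics on $\mathbb{R}^n$ $$\Phi_{\mathcal{A}}(x)=\sum_{i=0}^q z_i\,y^TA_iy,\quad x=(y,z)\in\mathbb{R}^{2m}\oplus\mathbb{R}^{q+1}\cong\mathbb{R}^n,\qquad \Phi_{\mathcal{B}}(X)=\sum_{j=0}^Q Z_j\,Y^TB_jY,\quad X=(Y,Z)\in\mathbb{R}^{2M}\oplus\mathbb{R}^{Q+1}\cong\mathbb{R}^n.$$ If $\Phi_{\mathcal{A}}$ and $\Phi_{\mathcal{B}}$ are congruent, then $q=Q$.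
   Context: A (symmetric) Clifford system on $\mathbb{R}^{2m}$ with $q\ge1$ is a tuple $(A_0,\ldots,A_q)$ of symmetric $2m\times2m$ real matrices with $A_iA_j+A_jA_i=2\delta_{ij}I$ for all $0\le i,j\le q$. Two homogeneous polynomials $f_1,f_2$ on $\mathbb{R}^n$ are congruent if $f_1(x)=c\,f_2(Ux)$ for all $x$, for some orthogonal linear map $U$ of $\mathbb{R}^n$ and some real $c\neq0$. *)

(* Defs.v *)
From HB Require Import structures.
From mathcomp Require Import all_boot all_order all_algebra.
From mathcomp Require Import reals.
Set Implicit Arguments. Unset Strict Implicit. Unset Printing Implicit Defensive.
Import Order.TTheory GRing.Theory Num.Theory.
Local Open Scope ring_scope.

Definition clifford_system (R : realType) (m q : nat)
  (A : 'I_q.+1 -> 'M[R]_(2 * m)) : Prop :=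
  (forall i, (A i)^T = A i) /\
  (forall i j, A i *m A j + A j *m A i = ((i == j)%:R *+ 2) *: 1%:M).

(* The cubic Phi_A(y,z) = sum_i z_i y^T A_i y on R^(2m) (+) R^(q+1),
   with vectors written as row vectors x = (y | z). *)
Definition cliff_cubic (R : realType) (m q : nat)
  (A : 'I_q.+1 -> 'M[R]_(2 * m)) (x : 'rV[R]_(2 * m + q.+1)) : R :=
  let y := lsubmx x in let z := rsubmx x in
  \sum_(i < q.+1) z 0 i * (y *m A i *m y^T) 0 0.

Definition orthogonal_mx (R : realType) (n : nat) (U : 'M[R]_n) : Prop :=
  U^T *m U = 1%:M.

(* f1 and f2 congruent: f1(x) = c f2(U x) for an orthogonal U and c <> 0.
   (Row-vector convention: U x is written x *m U^T.) *)
Definition congruent (R : realType) (n : nat) (f1 f2 : 'rV[R]_n -> R) : Prop :=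
  exists (U : 'M[R]_n) (c : R), orthogonal_mx U /\ c != 0 /\
    forall x : 'rV[R]_n, f1 x = c * f2 (x *m U^T).

(* Main.v *)
Require Import Defs.
From HB Require Import structures.
From mathcomp Require Import all_boot all_order all_algebra.
From mathcomp Require Import reals.
From mathcomp Require Import ring lra.
Import Order.TTheory GRing.Theory Num.Theory.
Local Open Scope ring_scope.
Set Implicit Arguments. Unset Strict Implicit. Unset Printing Implicit Defensive.

Section Gen.
Variable R : realType.

Definition fro r s (M : 'M[R]_(r, s)) := \sum_(a < r) \sum_(b < s) M a b ^+ 2.

Lemma fro_tr r s (M : 'M[R]_(r, s)) : fro M = \tr (M *m M^T).
Proof.
rewrite /fro /mxtrace; apply: eq_bigr => a _; rewrite mxE.
by apply: eq_bigr => b _; rewrite mxE expr2.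
Qed.

Lemma fro_orth n (U H : 'M[R]_n) : U^T *m U = 1%:M -> fro (U^T *m H *m U) = fro H.
Proof.
move=> hU; have hU' : U *m U^T = 1%:M by apply: mulmx1C.
rewrite !fro_tr !trmx_mul trmxK.
rewrite -!mulmxA [U *m (U^T *m _)]mulmxA hU' mul1mx.
by rewrite mxtrace_mulC -!mulmxA hU' mulmx1.
Qed.

Lemma fro_scale r s (a : R) (M : 'M[R]_(r, s)) : fro (a *: M) = a ^+ 2 * fro M.
Proof.
rewrite /fro mulr_sumr; apply: eq_bigr => i _; rewrite mulr_sumr.
by apply: eq_bigr => j _; rewrite mxE exprMn.
Qed.

Lemma fro_tr_mx r s (M : 'M[R]_(r, s)) : fro M^T = fro M.
Proof.
rewrite /fro exchange_big; apply: eq_bigr => i _; apply: eq_bigr => j _.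
by rewrite mxE.
Qed.

Lemma fro0 r s : fro (0 : 'M[R]_(r, s)) = 0.
Proof. by rewrite /fro big1 // => i _; rewrite big1 // => j _; rewrite mxE expr0n. Qed.

Lemma fro_block r1 r2 s1 s2 (a : 'M[R]_(r1, s1)) b (c : 'M[R]_(r2, s1)) (d : 'M[R]_(r2, s2)) :
  fro (block_mx a b c d) = fro a + fro b + fro c + fro d.
Proof.
rewrite /fro big_split_ord /=.
rewrite (eq_bigr (fun i => \sum_(j < s1) a i j ^+ 2 + \sum_(j < s2) b i j ^+ 2)); last first.
  by move=> i _; rewrite big_split_ord /=; congr (_ + _); apply: eq_bigr => j _;
    rewrite ?block_mxEul ?block_mxEur.
rewrite [X in _ + X](eq_bigr (fun i => \sum_(j < s1) c i j ^+ 2 + \sum_(j < s2) d i j ^+ 2)); last first.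
  by move=> i _; rewrite big_split_ord /=; congr (_ + _); apply: eq_bigr => j _;
    rewrite ?block_mxEdl ?block_mxEdr.
by rewrite !big_split /= !addrA.
Qed.

Definition d3 p (f : 'rV[R]_p -> R) u v w :=
  f (u + v + w) - f (u + v) - f (u + w) - f (v + w) + f u + f v + f w - f 0.

Lemma ev_entry n (H : 'M[R]_n) a b :
  ((delta_mx 0 a : 'rV[R]_n) *m H *m (delta_mx 0 b : 'rV[R]_n)^T) 0 0 = H a b.
Proof.
rewrite -rowE trmx_delta -colE !mxE; done.
Qed.

Lemma d3_inv p (f1 f2 : 'rV[R]_p -> R) (U : 'M[R]_p) c :
  (forall x, f1 x = c * f2 (x *m U^T)) ->
  forall u v w, d3 f1 u v w = c * d3 f2 (u *m U^T) (v *m U^T) (w *m U^T).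
Proof.
move=> h u v w; rewrite /d3 !h !mulmxDl mul0mx; ring.
Qed.

Lemma G_inv p (f1 f2 : 'rV[R]_p -> R) (U H : 'M[R]_p) c w :
  (forall x, f1 x = c * f2 (x *m U^T)) -> U^T *m U = 1%:M ->
  (forall u v, d3 f2 u v (w *m U^T) = (u *m H *m v^T) 0 0) ->
  \sum_a \sum_b (d3 f1 (delta_mx 0 a) (delta_mx 0 b) w) ^+ 2 = c ^+ 2 * fro H.
Proof.
move=> h hU hH.
rewrite -(fro_orth H hU) /fro mulr_sumr; apply: eq_bigr => a _.
rewrite mulr_sumr; apply: eq_bigr => b _.
rewrite (d3_inv h) hH -[(U^T *m H *m U) a b]ev_entry exprMn; congr (_ * (_ ^+ 2)).
by rewrite trmx_mul trmxK !mulmxA.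
Qed.

Lemma G_form p (f : 'rV[R]_p -> R) (H : 'M[R]_p) w :
  (forall u v, d3 f u v w = (u *m H *m v^T) 0 0) ->
  \sum_a \sum_b (d3 f (delta_mx 0 a) (delta_mx 0 b) w) ^+ 2 = fro H.
Proof.
move=> hH; apply: eq_bigr => a _; apply: eq_bigr => b _.
by rewrite hH ev_entry.
Qed.

Lemma polar n (S : 'M[R]_n) : S^T = S ->
  (forall w : 'rV[R]_n, (w *m S *m w^T) 0 0 = 0) -> S = 0.
Proof.
move=> hs hw; apply/matrixP => i j; rewrite mxE.
have hii := hw (delta_mx 0 i); have hjj := hw (delta_mx 0 j).
have hij := hw (delta_mx 0 i + delta_mx 0 j).
rewrite ev_entry in hii; rewrite ev_entry in hjj.
have addE : forall X Y : 'M[R]_(1,1), (X + Y) 0 0 = X 0 0 + Y 0 0 by move=> X Y; rewrite mxE.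
rewrite linearD /= !mulmxDl !mulmxDr !addE !ev_entry in hij.
have : S j i = S i j by rewrite -{1}hs mxE.
move=> e; move: hij; rewrite hii hjj e; lra.
Qed.

End Gen.

Section D.
Variable R : realType.

Lemma sum_delta p (i : 'I_p) (F : 'I_p -> R) : \sum_k (i == k)%:R * F k = F i.
Proof.
rewrite (bigD1 i) //= eqxx mul1r big1 ?addr0 // => k hk.
by rewrite eq_sym (negPf hk) mul0r.
Qed.

Definition dmx p (s : nat) (yv zv : R) : 'M[R]_p :=
  \matrix_(i, j) ((i == j)%:R * (if (i < s)%N then yv else zv)).

Lemma dmx_entry p s yv zv (i : 'I_p) : dmx p s yv zv i i = if (i < s)%N then yv else zv.
Proof. by rewrite mxE eqxx mul1r. Qed.

Lemma dmx_tr p s yv zv : (dmx p s yv zv)^T = dmx p s yv zv.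
Proof.
apply/matrixP => i j; rewrite !mxE.
case: (eqVneq i j) => [->|h] //.
by rewrite !mul0r.
Qed.

Lemma dmx_lin p s yv zv k x : k *: dmx p s yv zv - x%:M = dmx p s (k * yv - x) (k * zv - x).
Proof.
apply/matrixP => i j; rewrite !mxE.
case: (eqVneq i j) => [->|h]; rewrite ?eqxx /=.
  by case: ifP => _; ring.
by rewrite mulr0n subr0 !mul0r mulr0.
Qed.

Lemma dmx_mul p s a b c d : dmx p s a b *m dmx p s c d = dmx p s (a * c) (b * d).
Proof.
apply/matrixP => i j; rewrite !mxE.
rewrite (eq_bigr (fun k => (i == k)%:R * ((if (i < s)%N then a else b) *
   ((k == j)%:R * (if (k < s)%N then c else d))))); last first.
  by move=> k _; rewrite !mxE -!mulrA.
by rewrite sum_delta; case: ifP => _; rewrite mulrCA.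
Qed.

Lemma dmx_quad p s yv zv (w : 'rV[R]_p) :
  (w *m dmx p s yv zv *m w^T) 0 0 = \sum_i (w 0 i) ^+ 2 * (if (i < s)%N then yv else zv).
Proof.
rewrite mxE; apply: eq_bigr => j _; rewrite !mxE.
rewrite (eq_bigr (fun k => (j == k)%:R * (w 0 k * (if (k < s)%N then yv else zv)))); last first.
  by move=> k _; rewrite mxE eq_sym mulrCA.
by rewrite sum_delta expr2 mulrAC.
Qed.

Lemma dmx_quad_split s t yv zv (w : 'rV[R]_(s + t)) :
  (w *m dmx (s + t) s yv zv *m w^T) 0 0 =
  yv * \sum_(r < s) (lsubmx w 0 r) ^+ 2 + zv * \sum_(i < t) (rsubmx w 0 i) ^+ 2.
Proof.
rewrite dmx_quad big_split_ord !mulr_sumr; congr (_ + _); apply: eq_bigr => i _;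
  rewrite mxE.
  have -> : (lshift t i < s)%N = true by exact: (ltn_ord i).
  by rewrite mulrC.
have -> : (rshift s i < s)%N = false by rewrite ltnNge leq_addr.
by rewrite mulrC.
Qed.

Lemma dmx_trace p s t (e : p = (s + t)%N) yv zv :
  \tr (dmx p s yv zv) = s%:R * yv + t%:R * zv.
Proof.
subst p; rewrite /mxtrace big_split_ord.
rewrite (eq_bigr (fun _ : 'I_s => yv)); last first.
  move=> i _; rewrite dmx_entry; have -> : (lshift t i < s)%N = true by exact: (ltn_ord i).
  done.
rewrite (eq_bigr (fun _ : 'I_t => zv)); last first.
  move=> i _; rewrite dmx_entry; have -> : (rshift s i < s)%N = false by rewrite ltnNge leq_addr.
  done.
rewrite [LHS]/= !sumr_const !card_ord.
by rewrite !mulr_natl.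
Qed.

End D.

Section Cl.
Variable R : realType.
Variables (m q : nat) (A : 'I_q.+1 -> 'M[R]_(2 * m)).
Hypothesis Asym : forall i, (A i)^T = A i.
Hypothesis Acl : forall i j, A i *m A j + A j *m A i = ((i == j)%:R *+ 2) *: 1%:M.
Local Notation N := (2 * m + q.+1)%N.

Lemma e11 (M : 'M[R]_1) : M 0 0 = M^T 0 0.
Proof. by rewrite mxE. Qed.
Lemma addE (X Y : 'M[R]_1) : (X + Y) 0 0 = X 0 0 + Y 0 0.
Proof. by rewrite mxE. Qed.
Lemma scE a (X : 'M[R]_1) : (a *: X) 0 0 = a * X 0 0.
Proof. by rewrite mxE. Qed.

Definition L (x1 x2 x3 : 'rV[R]_N) : R :=
  \sum_(i < q.+1) (rsubmx x1) 0 i * ((lsubmx x2) *m A i *m (lsubmx x3)^T) 0 0.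

Lemma LDl x x' y z : L (x + x') y z = L x y z + L x' y z.
Proof. rewrite /L -big_split; apply: eq_bigr => i _ /=; by rewrite raddfD mxE mulrDl. Qed.
Lemma LDm x y y' z : L x (y + y') z = L x y z + L x y' z.
Proof. rewrite /L -big_split; apply: eq_bigr => i _ /=; by rewrite raddfD !mulmxDl addE mulrDr. Qed.
Lemma LDr x y z z' : L x y (z + z') = L x y z + L x y z'.
Proof. rewrite /L -big_split; apply: eq_bigr => i _ /=; by rewrite (raddfD lsubmx) raddfD mulmxDr addE mulrDr. Qed.
Lemma L0l y z : L 0 y z = 0.
Proof. by rewrite /L big1 // => i _; rewrite raddf0 mxE mul0r. Qed.
Lemma L0m x z : L x 0 z = 0.
Proof. by rewrite /L big1 // => i _; rewrite raddf0 !mul0mx !mxE mulr0. Qed.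
Lemma L0r x y : L x y 0 = 0.
Proof. by rewrite /L big1 // => i _; rewrite raddf0 trmx0 mulmx0 !mxE mulr0. Qed.

Lemma Lsym x y z : L x y z = L x z y.
Proof.
rewrite /L; apply: eq_bigr => i _; congr (_ * _).
by rewrite e11 !trmx_mul !trmxK Asym mulmxA.
Qed.

Lemma cubic_L x : cliff_cubic A x = L x x x.
Proof. by []. Qed.

Lemma d3_L u v w : d3 (cliff_cubic A) u v w = 2 * (L u v w + L v u w + L w u v).
Proof.
rewrite /d3 !cubic_L !(LDl, LDm, LDr) L0l.
have h1 := Lsym u w v; have h2 := Lsym v w u; have h3 := Lsym w v u.
lra.
Qed.


Definition Sm (w : 'rV[R]_N) : 'M[R]_(2 * m) := \sum_(i < q.+1) (rsubmx w) 0 i *: A i.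
Definition Cm (w : 'rV[R]_N) : 'M[R]_(2 * m, q.+1) :=
  \matrix_(r, i) (A i *m (lsubmx w)^T) r 0.
Definition Hm (w : 'rV[R]_N) : 'M[R]_N :=
  block_mx (2 *: Sm w) (2 *: Cm w) (2 *: (Cm w)^T) 0.

Lemma LS u v w : (lsubmx u *m Sm w *m (lsubmx v)^T) 0 0 = L w u v.
Proof.
rewrite /Sm /L mulmx_sumr mulmx_suml summxE; apply: eq_bigr => i _.
by rewrite -scalemxAr -scalemxAl scE.
Qed.

Lemma LC (y : 'rV[R]_(2 * m)) (z : 'rV[R]_q.+1) w :
  (y *m Cm w *m z^T) 0 0 = \sum_i z 0 i * (y *m A i *m (lsubmx w)^T) 0 0.
Proof.
rewrite mxE; apply: eq_bigr => i _.
rewrite [_^T i 0]mxE mulrC; congr (_ * _).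
rewrite -mulmxA [RHS]mxE mxE; apply: eq_bigr => r _.
by rewrite [Cm w r i]mxE.
Qed.

Lemma Hm_rep u v w : (u *m Hm w *m v^T) 0 0 = 2 * (L u v w + L v u w + L w u v).
Proof.
rewrite /Hm -{1}(hsubmxK u) -{1}(hsubmxK v) tr_row_mx mul_row_block mul_row_col mulmx0 addr0.
rewrite !mulmxDl -!scalemxAr -!scalemxAl !addE !scE LS.
have -> : (rsubmx u *m (Cm w)^T *m (lsubmx v)^T) 0 0 = (lsubmx v *m Cm w *m (rsubmx u)^T) 0 0.
  by rewrite e11 !trmx_mul !trmxK mulmxA.
rewrite !LC /L; ring.
Qed.

Lemma AA i : A i *m A i = 1%:M.
Proof.
have h := Acl i i; rewrite eqxx in h.
set X := A i *m A i in h *; apply/matrixP => r s.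
have := congr1 (fun M : 'M[R]_(2 * m) => M r s) h; rewrite /= !mxE mulr2n.
lra.
Qed.

Lemma trAA i j : \tr (A i *m A j) = (i == j)%:R * (2 * m)%:R.
Proof.
have h := congr1 mxtrace (Acl i j).
rewrite mxtraceD mxtraceZ mxtrace1 (mxtrace_mulC (A j)) mulr2n in h.
move: h; set t := \tr _; set b := (_ %:R); set K := (_ %:R) => h.
rewrite mulrDl in h; lra.
Qed.

Lemma Sm_sym w : (Sm w)^T = Sm w.
Proof. rewrite /Sm raddf_sum; apply: eq_bigr => i _; apply/matrixP => r s. by rewrite -{2}(Asym i) !mxE. Qed.

Lemma froS w : fro (Sm w) = (2 * m)%:R * \sum_i (rsubmx w 0 i) ^+ 2.
Proof.
rewrite fro_tr Sm_sym {1}/Sm mulmx_suml raddf_sum mulr_sumr; apply: eq_bigr => i _.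
rewrite /Sm mulmx_sumr raddf_sum.
rewrite (eq_bigr (fun j => (i == j)%:R * (rsubmx w 0 i * rsubmx w 0 j * (2 * m)%:R))); last first.
  by move=> j _; rewrite -scalemxAr -scalemxAl /= !mxtraceZ trAA; ring.
by rewrite sum_delta; ring.
Qed.

Lemma colsq n (X : 'cV[R]_n) : \sum_r (X r 0) ^+ 2 = (X^T *m X) 0 0.
Proof. by rewrite mxE; apply: eq_bigr => r _; rewrite mxE expr2. Qed.

Lemma froC w : fro (Cm w) = (q.+1)%:R * \sum_r (lsubmx w 0 r) ^+ 2.
Proof.
rewrite /fro exchange_big /=.
rewrite (eq_bigr (fun _ => \sum_r (lsubmx w 0 r) ^+ 2)).
  by rewrite sumr_const card_ord mulr_natl.
move=> i _.
rewrite (eq_bigr (fun r => ((A i *m (lsubmx w)^T) r 0) ^+ 2)); last by move=> r _; rewrite mxE.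
rewrite colsq trmx_mul trmxK Asym -mulmxA (mulmxA (A i)) AA mul1mx.
by rewrite mxE; apply: eq_bigr => r _; rewrite !mxE expr2.
Qed.

Lemma froHm w : fro (Hm w) =
  8 * ((q.+1)%:R * \sum_r (lsubmx w 0 r) ^+ 2 + m%:R * \sum_i (rsubmx w 0 i) ^+ 2).
Proof.
rewrite /Hm fro_block !fro_scale fro_tr_mx fro0 froS froC natrM; ring.
Qed.

Lemma d3_ext p (f g : 'rV[R]_p -> R) u v w : (forall x, f x = g x) -> d3 f u v w = d3 g u v w.
Proof. by move=> h; rewrite /d3 !h. Qed.

Lemma hess p (e : p = N) (w : 'rV[R]_p) :
  exists H : 'M[R]_p,
   (forall u v, d3 (fun x : 'rV[R]_p => cliff_cubic A (castmx (erefl 1%N, e) x)) u v w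
      = (u *m H *m v^T) 0 0) /\
   fro H = 8 * (w *m dmx p (2 * m) (q.+1)%:R m%:R *m w^T) 0 0.
Proof.
subst p; exists (Hm w); split.
  move=> u v; rewrite (d3_ext (g := cliff_cubic A)); last by move=> x; rewrite castmx_id.
  by rewrite d3_L Hm_rep.
by rewrite froHm dmx_quad_split.
Qed.

End Cl.

Lemma arith (R : realType) (a b a' b' k : R) : 0 < a -> 0 < b -> 0 < a' -> 0 < b' -> 0 < k ->
  (k * b' - b) * (k * b' - a) = 0 -> (k * a' - b) * (k * a' - a) = 0 ->
  2 * a * b + b * a = k * (2 * a' * b' + b' * a') ->
  2 * a * (b * b) + b * (a * a) = k ^+ 2 * (2 * a' * (b' * b') + b' * (a' * a')) -> b = b'.
Proof.
move=> ha hb ha' hb' hk H1 H2 T1 T2.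
have k0 : k != 0 by rewrite gt_eqF.
have a0 : a' != 0 by rewrite gt_eqF.
have b0 : b' != 0 by rewrite gt_eqF.
move/eqP: H1; rewrite mulf_eq0 !subr_eq0 => /orP[] /eqP E1;
move/eqP: H2; rewrite mulf_eq0 !subr_eq0 => /orP[] /eqP E2.
- have ea : a' = b' by apply: (mulfI k0); rewrite E1 E2.
  rewrite -ea in E1 T1 T2 *; rewrite -E2 in T1 T2 *.
  have C : (k * a') * a = (k * a') * a' by lra.
  have ea1 := mulfI (mulf_neq0 k0 a0) C.
  rewrite ea1 in T2.
  have C2 : (a' * a' * a' * k) * k = (a' * a' * a' * k) * 1 by lra.
  have hk1 := mulfI (mulf_neq0 (mulf_neq0 (mulf_neq0 a0 a0) a0) k0) C2.
  by rewrite hk1 mul1r.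
- have hk1 : k = 1.
    have C : (k * k) * (a' * b') = k * (a' * b') by rewrite -E1 -E2 in T1; lra.
    have C2 := mulIf (mulf_neq0 a0 b0) C.
    by apply: (mulIf k0); rewrite mul1r.
  by rewrite -E1 hk1 mul1r.
- have hk1 : k = 1.
    have C : (k * k) * (a' * b') = k * (a' * b') by rewrite -E1 -E2 in T1; lra.
    have C2 := mulIf (mulf_neq0 a0 b0) C.
    by apply: (mulIf k0); rewrite mul1r.
  rewrite hk1 !mul1r in E1 E2; rewrite -E1 -E2 in T2 *.
  have C : (a' * b') * a' = (a' * b') * b' by rewrite hk1 in T2; lra.
  exact: (mulfI (mulf_neq0 a0 b0) C).
- have ea : a' = b' by apply: (mulfI k0); rewrite E1 E2.
  rewrite -ea in E1 T1 T2 *; rewrite -E2 in T1 T2.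
  have C : (k * a') * b = (k * a') * a' by lra.
  exact: (mulfI (mulf_neq0 k0 a0) C).
Qed.

Lemma trZ (R : realType) r s (a : R) (X : 'M[R]_(r, s)) : (a *: X)^T = a *: X^T.
Proof. by apply/matrixP => i j; rewrite !mxE. Qed.

Lemma subE (R : realType) (X Y : 'M[R]_1) : (X - Y) 0 0 = X 0 0 - Y 0 0.
Proof. by rewrite !mxE. Qed.

Lemma dmx00 (R : realType) p s : dmx p s (0 : R) 0 = 0.
Proof. by apply/matrixP => i j; rewrite !mxE; case: ifP; rewrite mulr0. Qed.

Unset Implicit Arguments.
Theorem corollary2 (R : realType) (n m M q Q : nat)
  (hm : (1 <= m)%N) (hM : (1 <= M)%N) (hq : (1 <= q)%N) (hQ : (1 <= Q)%N)
  (hA : n = (2 * m + q.+1)%N) (hB : n = (2 * M + Q.+1)%N)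
  (A : 'I_q.+1 -> 'M[R]_(2 * m)) (B : 'I_Q.+1 -> 'M[R]_(2 * M)) :
  clifford_system A -> clifford_system B ->
  congruent (fun x : 'rV[R]_n => cliff_cubic A (castmx (erefl 1%N, hA) x))
            (fun x : 'rV[R]_n => cliff_cubic B (castmx (erefl 1%N, hB) x)) ->
  q = Q.
Proof.
move=> [Asym Acl] [Bsym Bcl] [U [c [hU [hc hf]]]].
rewrite /orthogonal_mx in hU.
have hU' : U *m U^T = 1%:M by apply: mulmx1C.
pose DA := dmx n (2 * m) (q.+1)%:R (m%:R : R).
pose DB := dmx n (2 * M) (Q.+1)%:R (M%:R : R).
pose k := c ^+ 2.
have quad : forall w : 'rV[R]_n,
    (w *m DA *m w^T) 0 0 = k * (w *m (U^T *m DB *m U) *m w^T) 0 0.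
  move=> w.
  have [HA [rA fA]] := hess Asym Acl hA w.
  have [HB [rB fB]] := hess Bsym Bcl hB (w *m U^T).
  have e1 := G_form rA.
  have e2 := G_inv (f1 := fun x : 'rV[R]_n => cliff_cubic A (castmx (erefl 1%N, hA) x))
                   (f2 := fun x : 'rV[R]_n => cliff_cubic B (castmx (erefl 1%N, hB) x)) hf hU rB.
  rewrite e1 fA fB in e2.
  have -> : w *m (U^T *m DB *m U) *m w^T = w *m U^T *m DB *m (w *m U^T)^T.
    by rewrite trmx_mul trmxK !mulmxA.
  rewrite /k; lra.
have DAeq : DA = k *: (U^T *m DB *m U).
  apply/eqP; rewrite -subr_eq0; apply/eqP; apply: polar.
    by rewrite raddfB /= trZ !trmx_mul trmxK /DA /DB !dmx_tr mulmxA.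
  move=> w; rewrite mulmxBr mulmxBl subE -scalemxAr -scalemxAl scE quad.
  by rewrite subrr.
have kDB : k *: DB = U *m DA *m U^T.
  rewrite DAeq -scalemxAr -scalemxAl !mulmxA hU' mul1mx -mulmxA hU' mulmx1.
  by [].
have conj : forall x : R, k *: DB - x%:M = U *m (DA - x%:M) *m U^T.
  move=> x; rewrite mulmxBr mulmxBl -kDB mul_mx_scalar -scalemxAl hU'.
  by rewrite scalemx1.
have poly0 : (k *: DB - (q.+1)%:R%:M) *m (k *: DB - (m%:R)%:M) = 0.
  rewrite !conj !mulmxA -(mulmxA _ U^T U) hU mulmx1 -(mulmxA U).
  rewrite -[DA]scale1r /DA !dmx_lin dmx_mul !mul1r !subrr mul0r mulr0 dmx00.
  by rewrite mulmx0 mul0mx.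
rewrite /DB !dmx_lin dmx_mul in poly0.
have n0 : (0 < n)%N by rewrite hB addnS.
have n1 : (2 * M < n)%N by rewrite hB addnS ltnS leq_addr.
have H1 := congr1 (fun X : 'M[R]_n => X (Ordinal n0) (Ordinal n0)) poly0.
have H2 := congr1 (fun X : 'M[R]_n => X (Ordinal n1) (Ordinal n1)) poly0.
rewrite /= dmx_entry /= muln_gt0 hM /= mxE in H1.
rewrite /= dmx_entry /= ltnn mxE in H2.
have T1 : \tr DA = k * \tr DB.
  by rewrite DAeq mxtraceZ mxtrace_mulC mulmxA hU' mul1mx.
have T2 : \tr (DA *m DA) = k ^+ 2 * \tr (DB *m DB).
  rewrite DAeq -scalemxAr -scalemxAl !mxtraceZ mulrA -expr2; congr (_ * _).
  rewrite !mulmxA -(mulmxA _ U U^T) hU' mulmx1 -!mulmxA mxtrace_mulC -!mulmxA hU' mulmx1.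
  by [].
rewrite /DA /DB !dmx_mul !(dmx_trace hA) !(dmx_trace hB) in T1 T2.
rewrite !natrM in T1 T2.
have hb : (q.+1)%:R = (Q.+1)%:R :> R.
  apply: (arith (a := m%:R) (b := (q.+1)%:R) (a' := M%:R) (b' := (Q.+1)%:R) (k := k)).
  all: try by rewrite ltr0n.
  - by rewrite /k lt0r sqrf_eq0 hc sqr_ge0.
  - exact: H1.
  - exact: H2.
  - exact: T1.
  - exact: T2.
by move/eqP: hb; rewrite eqr_nat => /eqP [].
Qed.
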